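(* Suppose the neighbor graph $\mathbb N$ (with $m\ge 2$ vertices, no self-arcs) is strongly connected and let $\mathrm D=\{\mathbb E_0,\dots,\mathbb E_p\}$ be an ear decomposition of $\mathbb N$. If for each ear $\mathbb E\in\mathrm D$ the indexed family of subspaces $\{\mathcal K_{ji}:(j,i)\text{ an arc of }\mathbb E\}$ is independent, where $\mathcal K_{ji}=\ker C_{ji}$, then $\bar{\mathbb N}$ is well-configured.
   Context: Setup: there are $m$ agents labeled $1,\dots,m$, each with state $x_i\in\mathbb R^n$. The neighbor graph $\mathbb N$ is a directed graph on vertex set $\{1,\dots,m\}$ without self-arcs; every arc $(j,i)$ is assigned a real matrix $C_{ji}$ with $n$ columns (any number of rows), and $\bar{\mathbb N}$ denotes $\mathbb N$ together with these matrices. $\bar{\mathbb N}$ is called well-configured if for all $x_1,\dots,x_m\in\mathbb R^n$, the conditions $C_{ji}x_i=C_{ji}x_j$ for every arc $(j,i)$ imply $x_1=\cdots=x_m$. A finite indexed family of subspaces $\{\mathcal S_1,\dots,\mathcal S_p\}$ of $\mathbb R^n$ is independent if $\mathcal S_i\cap\sum_{j\ne i}\mathcal S_j=0$ for every $i$. A directed path is a subgraph with distinct vertices $v_0,\dots,v_k$ ($k\ge1$) and arcs $(v_{r-1},v_r)$, $r=1,\dots,k$; its end-vertices are $v_0,v_k$. A directed cycle is a subgraph with distinct vertices $v_1,\dots,v_k$ ($k\ge 2$) and arcs $(v_r,v_{r+1})$, $r<k$, and $(v_k,v_1)$. An ear decomposition of a directed graph $\mathbb G$ (no self-arcs, at least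 two vertices) is a sequence of subgraphs $\mathbb E_0,\dots,\mathbb E_p$ such that $\mathbb E_0$ is a directed cycle, each $\mathbb E_i$ ($i\ge1$) is a directed path or directed cycle, the $\mathbb E_i$ are pairwise arc-disjoint with union $\mathbb G$, and for each $i\ge 1$: if $\mathbb E_i$ is a directed cycle it has exactly one vertex in common with $\bigcup_{k<i}\mathbb E_k$, and if it is a directed path its two end-vertices are the only vertices it has in common with $\bigcup_{k<i}\mathbb E_k$. The sets $\mathbb E_i$ are called ears. *)

(* Defs.v *)
From HB Require Import structures.
From mathcomp Require Import all_boot all_order all_algebra.
From mathcomp Require Import reals.
Set Implicit Arguments. Unset Strict Implicit. Unset Printing Implicit Defensive.
Import Order.TTheory GRing.Theory Num.Theory.
Local Open Scope ring_scope.

(* Arcs are pairs (j, i) : 'I_m * 'I_m, meaning an arc from j to i. *)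
Definition subgraph (m : nat) := ({set 'I_m} * {set 'I_m * 'I_m})%type.

(* E is the directed path with distinct vertices v0 :: t (k = size t >= 1),
   arcs (v_{r-1}, v_r); its end-vertices are v0 and last v0 t. *)
Definition dpath_on (m : nat) (E : subgraph m) (v0 : 'I_m) (t : seq 'I_m) : Prop :=
  [/\ (1 <= size t)%N, uniq (v0 :: t),
      E.1 = [set x | x \in v0 :: t] &
      E.2 = [set a | a \in zip (v0 :: t) t]].

Definition is_dpath (m : nat) (E : subgraph m) : Prop :=
  exists v0 t, dpath_on E v0 t.

(* E is the directed cycle with distinct vertices v1 :: t (k = size t + 1 >= 2),
   arcs (v_r, v_{r+1}) and (v_k, v_1). *)
Definition dcycle_on (m : nat) (E : subgraph m) (v1 : 'I_m) (t : seq 'I_m) : Prop :=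
  [/\ (1 <= size t)%N, uniq (v1 :: t),
      E.1 = [set x | x \in v1 :: t] &
      E.2 = [set a | a \in zip (v1 :: t) (rcons t v1)]].

Definition is_dcycle (m : nat) (E : subgraph m) : Prop :=
  exists v1 t, dcycle_on E v1 t.

Definition ear_decomposition (m : nat) (A : {set 'I_m * 'I_m}) (p : nat)
    (D : nat -> subgraph m) : Prop :=
  [/\ is_dcycle (D 0%N),
      (forall i, (1 <= i <= p)%N -> is_dpath (D i) \/ is_dcycle (D i)),
      (forall i k, (i <= p)%N -> (k <= p)%N -> i != k ->
          [disjoint (D i).2 & (D k).2]),
      (\bigcup_(i < p.+1) (D i).1 = [set: 'I_m] /\
       \bigcup_(i < p.+1) (D i).2 = A) &
      (forall i, (1 <= i <= p)%N ->
         let prev := \bigcup_(k < i) (D k).1 in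
         (is_dcycle (D i) -> #|(D i).1 :&: prev| = 1%N) /\
         (forall v0 t, dpath_on (D i) v0 t ->
            (D i).1 :&: prev = [set v0; last v0 t]))].

Definition strongly_connected (m : nat) (A : {set 'I_m * 'I_m}) : Prop :=
  forall u v : 'I_m, connect (fun j i => (j, i) \in A) u v.

Definition Kspace (R : fieldType) (r n : nat) (C : 'M[R]_(r, n))
  : {vspace 'cV[R]_n} := lker (linfun (mulmx C)).

Definition independent_family (R : fieldType) (n : nat) (I : finType)
    (K : I -> {vspace 'cV[R]_n}) (S : {set I}) : Prop :=
  forall a, a \in S -> (K a :&: \sum_(b in S | b != a) K b = 0)%VS.

Definition well_configured (R : fieldType) (m n : nat) (A : {set 'I_m * 'I_m})
    (r : 'I_m -> 'I_m -> nat) (C : forall j i : 'I_m, 'M[R]_(r j i, n)) : Prop :=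
  forall x : 'I_m -> 'cV[R]_n,
    (forall j i, (j, i) \in A -> C j i *m x i = C j i *m x j) ->
    forall i k, x i = x k.

(* Main.v *)
Require Import Defs.
From HB Require Import structures.
From mathcomp Require Import all_boot all_order all_algebra.
From mathcomp Require Import reals.
Set Implicit Arguments. Unset Strict Implicit. Unset Printing Implicit Defensive.
Import Order.TTheory GRing.Theory Num.Theory.
Local Open Scope ring_scope.

Lemma indep_zero (R : fieldType) n (I : finType) (K : I -> {vspace 'cV[R]_n})
  (S : {set I}) (d : I -> 'cV[R]_n) :
  independent_family K S -> (forall a, a \in S -> d a \in K a) ->
  \sum_(a in S) d a = 0 -> forall a, a \in S -> d a = 0.
Proof.
move=> HI Hd Hs a aS; apply/eqP; rewrite -memv0 -(HI a aS) memv_cap Hd //=.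
have -> : d a = - \sum_(b in S | b != a) d b.
  by apply/eqP; rewrite -addr_eq0 -(bigD1 a) //= Hs.
rewrite memvN; apply: memv_sumr => b /andP[bS _]; exact: Hd.
Qed.

Lemma tel_path (V : zmodType) (T : Type) (x : T -> V) v s :
  \sum_(a <- zip (v::s) s) (x a.2 - x a.1) = x (last v s) - x v.
Proof.
elim: s v => [|y s IH] v /=; first by rewrite big_nil subrr.
by rewrite big_cons IH /= addrC addrA subrK.
Qed.

Lemma tel_cyc (V : zmodType) (T : Type) (x : T -> V) v s w :
  \sum_(a <- zip (v::s) (rcons s w)) (x a.2 - x a.1) = x w - x v.
Proof.
elim: s v => [|y s IH] v /=; first by rewrite big_cons big_nil addr0.
by rewrite big_cons IH /= addrC addrA subrK.
Qed.

Lemma consec (T : eqType) (V : Type) (x : T -> V) v s u :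
  (forall a, a \in zip (v::s) (s ++ u) -> x a.1 = x a.2) ->
  forall y, y \in v::s -> x y = x v.
Proof.
elim: s v => [|y s IH] v H z; first by rewrite inE => /eqP->.
rewrite inE => /orP[/eqP->//|zs].
have e : x v = x y by apply: (H (v,y)); rewrite /= inE eqxx.
rewrite e; apply: IH => // a ha; apply: H; by rewrite /= inE ha orbT.
Qed.

Lemma arcs_eq (R : fieldType) (m n : nat) (A : {set 'I_m * 'I_m})
    (r : 'I_m -> 'I_m -> nat) (C : forall j i : 'I_m, 'M[R]_(r j i, n))
    (x : 'I_m -> 'cV[R]_n) (S : {set 'I_m * 'I_m}) (l : seq ('I_m * 'I_m)) :
  (forall j i, (j, i) \in A -> C j i *m x i = C j i *m x j) ->
  uniq l -> S = [set a | a \in l] -> (forall a, a \in S -> a \in A) ->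
  independent_family (fun a : 'I_m * 'I_m => Kspace (C a.1 a.2)) S ->
  \sum_(a <- l) (x a.2 - x a.1) = 0 ->
  forall a, a \in l -> x a.1 = x a.2.
Proof.
move=> Hx ul HS SA HI Hs a al.
have aS : a \in S by rewrite HS inE.
suff h : x a.2 - x a.1 = 0 by apply/esym/eqP; rewrite -subr_eq0 h.
apply: (@indep_zero _ _ _ _ S (fun a => x a.2 - x a.1) HI) => //.
  move=> b bS; rewrite /Kspace memv_ker lfunE /= mulmxBr.
  by case: b bS => j i bS; rewrite (Hx j i (SA _ bS)) subrr.
rewrite -[RHS]Hs (big_uniq _ ul); apply: eq_bigl => b; by rewrite HS inE.
Qed.

Theorem theorem1 (R : realType) (m n : nat) (A : {set 'I_m * 'I_m})
    (r : 'I_m -> 'I_m -> nat) (C : forall j i : 'I_m, 'M[R]_(r j i, n))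
    (p : nat) (D : nat -> subgraph m) :
  (2 <= m)%N ->
  (forall a, a \in A -> a.1 != a.2) ->
  strongly_connected A ->
  ear_decomposition A p D ->
  (forall e, (e <= p)%N ->
     independent_family (fun a : 'I_m * 'I_m => Kspace (C a.1 a.2)) (D e).2) ->
  well_configured A C.
Proof.
move=> _ _ _ [Hc0 Hkind _ [Hcov HA] Hatt] Hind x Hx.
have Hsub : forall e, (e <= p)%N -> forall a, a \in (D e).2 -> a \in A.
  move=> e ep a ae; rewrite -HA; apply/bigcupP.
  by exists (Ordinal (ep : (e < p.+1)%N)).
have Hcyc : forall e, (e <= p)%N -> forall w t, dcycle_on (D e) w t ->
    forall y, y \in (D e).1 -> x y = x w.
  move=> e ep w t [_ ut H1 H2] y; rewrite H1 inE.
  apply: (@consec _ _ x w t [:: w]); rewrite cats1.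
  apply: (arcs_eq Hx (zip_uniql _ ut) H2 (Hsub e ep) (Hind e ep)).
  by rewrite tel_cyc subrr.
have Hpath : forall e, (e <= p)%N -> forall v t, dpath_on (D e) v t ->
    x (last v t) = x v -> forall y, y \in (D e).1 -> x y = x v.
  move=> e ep v t [_ ut H1 H2] el y; rewrite H1 inE.
  apply: (@consec _ _ x v t [::]); rewrite cats0.
  apply: (arcs_eq Hx (zip_uniql _ ut) H2 (Hsub e ep) (Hind e ep)).
  by rewrite tel_path el subrr.
case: Hc0 => v1 [t1 Hc1].
have claim : forall i, (i <= p)%N -> forall y,
    y \in \bigcup_(k < i.+1) (D k).1 -> x y = x v1.
  elim=> [|i IH] ip y.
    rewrite big_ord1 => yD; exact: (Hcyc 0%N ip v1 t1 Hc1).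
  rewrite big_ord_recr /= inE => /orP[yprev|yD].
    exact: IH (ltnW ip) y yprev.
  have ip1 : (1 <= i.+1 <= p)%N by rewrite ip.
  have [Hac Hap] := Hatt i.+1 ip1.
  case: (Hkind i.+1 ip1) => [[v [t Hp]]|[w [t Hc]]].
    have Hi := Hap v t Hp.
    have vI : v \in (D i.+1).1 :&: \bigcup_(k < i.+1) (D k).1.
      by rewrite Hi !inE eqxx.
    have lI : last v t \in (D i.+1).1 :&: \bigcup_(k < i.+1) (D k).1.
      by rewrite Hi !inE eqxx orbT.
    move: vI lI; rewrite !inE => /andP[_ vP] /andP[_ lP].
    have xv := IH (ltnW ip) v vP.
    rewrite (Hpath _ ip v t Hp _ y yD) //.
    by rewrite xv (IH (ltnW ip) _ lP).
  have := Hac (ex_intro _ w (ex_intro _ t Hc)).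
  move=> hc; have : (0 < #|(D i.+1).1 :&: \bigcup_(k < i.+1) (D k).1|)%N
    by rewrite hc.
  case/card_gt0P => z; rewrite inE => /andP[zD zP].
  rewrite (Hcyc _ ip w t Hc y yD) -(Hcyc _ ip w t Hc z zD).
  exact: IH (ltnW ip) z zP.
move=> i k.
have pp : (p <= p)%N by [].
by rewrite (claim p pp i) ?(claim p pp k) // Hcov inE.
Qed.
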